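(* Let $T\subseteq\mathfrak{S}_n$ be invariant under the modified Foata–Strehl action. Then $\Psi'$ restricts to a bijection $T\to T$, and $\operatorname{veh}(\pi)=\operatorname{des}(\Psi'(\pi))$ for all $\pi\in T$.
   Context: Permutations $\pi\in\mathfrak{S}_n$ are words $a_1\cdots a_n$; $\operatorname{des}(\pi)=|\{i\in[n-1]:a_i>a_{i+1}\}|$. Set $a_0=a_{n+1}=n+1$; a letter $a_k$ is a valley if $a_{k-1}>a_k<a_{k+1}$, a peak if $a_{k-1}<a_k>a_{k+1}$, a double ascent if $a_{k-1}<a_k<a_{k+1}$, a double descent if $a_{k-1}>a_k>a_{k+1}$. For $x\in[n]$: if $x$ is a double descent, $\varphi'_x(\pi)$ moves $x$ to between the first pair of consecutive letters $a_i,a_{i+1}$ to the right of $x$ with $a_i<x<a_{i+1}$; if a double ascent, to between the first pair to the left with $a_i>x>a_{i+1}$; if a peak or valley, $\varphi'_x(\pi)=\pi$. The modified Foata–Strehl action is the $\mathbb{Z}_2^n$-action generated by these commuting involutions; $T$ is invariant if $\varphi'_x(T)\subseteq T$ for all $x$. The decreasing binary tree of a word $w$: empty if $w$ empty; otherwise $w=LmR$ with $m$ the greatest letter, root $m$, left subtree the tree of $L$, right subtree the tree of $R$. $r_\pi(x)$ is the number of right edges on the root-to-$x$ path in the tree of $\pi$, $\operatorname{Odd}(\pi)=\{x:r_\pi(x)\text{ odd}\}$, and $\Psi'(\pi)=\prod_{x\in\operatorname{Odd}(\pi)}\varphi'_x(\pi)$. The unordered decreasing tree $T(w;\infty)$ ($\infty$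 a symbol larger than all letters): if $w$ is empty it is a single vertex $\infty$; otherwise write $w=m_1w_1m_2w_2\cdots m_kw_k$ with $m_1,\dots,m_k$ the left-to-right maxima of $w$, and $T(w;\infty)$ has root $\infty$ with subtrees $T(w_i;m_i)$ (defined in the same way with root labeled $m_i$). $\operatorname{veh}(\pi)$ is the number of non-root vertices of even height (root at height $0$) in $T(\pi;\infty)$. *)

(* Defs.v *)
From mathcomp Require Import all_boot.
Set Implicit Arguments. Unset Strict Implicit. Unset Printing Implicit Defensive.

Definition is_perm_word (n : nat) (w : seq nat) : bool := perm_eq w (iota 1 n).

Definition des (w : seq nat) : nat :=
  count (fun p : nat * nat => p.2 < p.1) (zip w (behead w)).

(* sentinel a_0 = a_{n+1} = n+1 (n = size w) *)
Definition sent (w : seq nat) : nat := (size w).+1.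

Definition left_nb (w : seq nat) (x : nat) : nat :=
  nth (sent w) (sent w :: w) (index x w).
Definition right_nb (w : seq nat) (x : nat) : nat :=
  nth (sent w) w (index x w).+1.

Definition is_dd (w : seq nat) (x : nat) : bool :=
  (x \in w) && (x < left_nb w x) && (right_nb w x < x).
Definition is_da (w : seq nat) (x : nat) : bool :=
  (x \in w) && (left_nb w x < x) && (x < right_nb w x).

(* remove x and reinsert it between the first pair a_i, a_{i+1} to the
   right of x's position with a_i < x < a_{i+1} (a_{n+1} = n+1). *)
Definition move_right (w : seq nat) (x : nat) : seq nat :=
  let k := index x w in
  let u := take k w in
  let v := drop k.+1 w in
  let j := find (fun p : nat * nat => (p.1 < x) && (x < p.2))
                (zip v (rcons (behead v) (sent w))) in
  u ++ take j.+1 v ++ x :: drop j.+1 v.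

(* the modified Foata--Strehl involution phi'_x; moving a double ascent to
   the left is the mirror image (under reversal) of moving a double descent
   to the right *)
Definition phi' (x : nat) (w : seq nat) : seq nat :=
  if is_dd w x then move_right w x
  else if is_da w x then rev (move_right (rev w) x)
  else w.

Inductive btree := BLeaf | BNode of btree & nat & btree.

Definition maxw (w : seq nat) : nat := foldr maxn 0 w.

(* fuel k; k = size w suffices *)
Fixpoint dbt_f (k : nat) (w : seq nat) : btree :=
  match k with
  | 0 => BLeaf
  | k'.+1 =>
    if w is [::] then BLeaf else
    let m := maxw w in
    let i := index m w in
    BNode (dbt_f k' (take i w)) m (dbt_f k' (drop i.+1 w))
  end.

Definition dbt (w : seq nat) : btree := dbt_f (size w) w.

Fixpoint blabels (t : btree) : seq nat :=
  match t with
  | BLeaf => [::]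
  | BNode l m r => blabels l ++ m :: blabels r
  end.

Fixpoint rights (t : btree) (x : nat) : nat :=
  match t with
  | BLeaf => 0
  | BNode l m r =>
    if x == m then 0
    else if x \in blabels l then rights l x else (rights r x).+1
  end.

Definition r_pi (w : seq nat) (x : nat) : nat := rights (dbt w) x.

Definition Odd (w : seq nat) : seq nat :=
  [seq x <- iota 1 (size w) | odd (r_pi w x)].

Definition Psi' (w : seq nat) : seq nat := foldr phi' w (Odd w).

Inductive rtree := RNode of nat & seq rtree.

(* decomposition w = m1 w1 m2 w2 ... mk wk along left-to-right maxima *)
Fixpoint lrblocks_f (k : nat) (w : seq nat) : seq (nat * seq nat) :=
  match k, w with
  | 0, _ => [::]
  | _, [::] => [::]
  | k'.+1, a :: s =>
    let j := find (fun b => a < b) s in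
    (a, take j s) :: lrblocks_f k' (drop j s)
  end.

Definition lrblocks (w : seq nat) := lrblocks_f (size w) w.

Fixpoint utree_f (k : nat) (w : seq nat) (r : nat) : rtree :=
  match k with
  | 0 => RNode r [::]
  | k'.+1 => RNode r [seq utree_f k' p.2 p.1 | p <- lrblocks w]
  end.

(* root labelled by (size w).+1, playing the role of infinity *)
Definition utree (w : seq nat) : rtree := utree_f (size w).+1 w (size w).+1.

Fixpoint even_count (t : rtree) (h : nat) : nat :=
  let: RNode _ cs := t in
  (~~ odd h) + sumn [seq even_count c h.+1 | c <- cs].

(* non-root vertices of even height (root at height 0) *)
Definition veh (w : seq nat) : nat :=
  let: RNode _ cs := utree w in sumn [seq even_count c 1 | c <- cs].

(* Main.v *)
Require Import Defs.
From mathcomp Require Import all_boot.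
From mathcomp Require Import zify.
Set Implicit Arguments. Unset Strict Implicit. Unset Printing Implicit Defensive.

Definition isleaf t := if t is BLeaf then true else false.
Definition onechild l r := isleaf l != isleaf r.

Fixpoint heap t := match t with BLeaf => true | BNode l m r =>
  [&& all (fun y => y < m) (blabels l), all (fun y => y < m) (blabels r), heap l & heap r] end.

Lemma maxw_ge w y : y \in w -> y <= maxw w.
Proof.
elim: w => //= a s IH; rewrite in_cons => /orP[/eqP->|/IH]; first exact: leq_maxl.
by move=> H; apply: (leq_trans H); exact: leq_maxr.
Qed.

Lemma maxw_in a s : maxw (a :: s) \in a :: s.
Proof.
elim: s a => [|b s IH] a /=; first by rewrite maxn0 mem_head.
rewrite {1}/maxn; case: ifP => _; last exact: mem_head.
by rewrite in_cons (IH b) orbT.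
Qed.

Lemma maxw_eq w m : m \in w -> all (fun y => y <= m) w -> maxw w = m.
Proof.
move=> Hm /allP Ha; apply/eqP; rewrite eqn_leq maxw_ge // andbT.
case: w Hm Ha => // a s _ Ha; exact: Ha (maxw_in a s).
Qed.

Lemma take_idx_drop (w : seq nat) m : m \in w ->
  take (index m w) w ++ m :: drop (index m w).+1 w = w.
Proof.
move=> mw; rewrite -[X in _ = X](cat_take_drop (index m w) w); congr (_ ++ _).
by rewrite (drop_nth m (_ : index m w < size w)) ?index_mem // nth_index.
Qed.

Lemma dbt_fP k w : size w <= k -> uniq w -> heap (dbt_f k w) /\ blabels (dbt_f k w) = w.
Proof.
elim: k w => [|k IH] w; first by case: w.
case: w => [|a s] //.
set w := a :: s => Hs Hu.
set m := maxw w; set i := index m w.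
have -> : dbt_f k.+1 w = BNode (dbt_f k (take i w)) m (dbt_f k (drop i.+1 w)) by [].
have mw : m \in w by exact: maxw_in.
have Ew : take i w ++ m :: drop i.+1 w = w by exact: take_idx_drop.
have Hu' := Hu; rewrite -Ew cat_uniq [has _ (_ :: _)]/= cons_uniq in Hu'.
case/and3P: Hu' => Hut /norP [Hmt _] /andP [Hmd Hud].
have Hsz : size (take i w) + (size (drop i.+1 w)).+1 = size w by have := congr1 size Ew; rewrite size_cat.
have [H1 E1] := IH (take i w) ltac:(lia) Hut.
have [H2 E2] := IH (drop i.+1 w) ltac:(lia) Hud.
rewrite /= E1 E2 Ew H1 H2 !andbT; split=> //.
apply/andP; split; apply/allP=> y Hy; rewrite ltn_neqAle maxw_ge.
- by rewrite andbT; apply/eqP=> E; rewrite -E Hy in Hmt.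
- by rewrite -Ew mem_cat Hy.
- by rewrite andbT; apply/eqP=> E; rewrite -E Hy in Hmd.
- by rewrite -Ew mem_cat in_cons Hy !orbT.
Qed.

Lemma dbtB t k : heap t -> uniq (blabels t) -> size (blabels t) <= k -> dbt_f k (blabels t) = t.
Proof.
elim: t k => [|l IHl m r IHr] k /=; first by case: k.
case/and4P=> Hl Hr hl hr Hu Hs.
case: k Hs => [|k] Hs; first by rewrite size_cat /= in Hs; lia.
rewrite cat_uniq [has _ (_ :: _)]/= cons_uniq in Hu; case/and3P: Hu => Hul /norP [Hml _] /andP [Hmr Hur].
have Hmax : maxw (blabels l ++ m :: blabels r) = m.
  apply: maxw_eq; first by rewrite mem_cat mem_head orbT.
  rewrite all_cat /= leqnn /=; apply/andP; split; apply: sub_all Hl + apply: sub_all Hr;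
  by move=> y /ltnW.
case E: (blabels l ++ m :: blabels r) => [|a s]; first by case: (blabels l) E.
have -> : dbt_f k.+1 (a :: s) = BNode (dbt_f k (take (index (maxw (a :: s)) (a :: s)) (a :: s))) (maxw (a :: s)) (dbt_f k (drop (index (maxw (a :: s)) (a :: s)).+1 (a :: s))) by [].
rewrite -E Hmax index_cat (negbTE Hml) /= eqxx addn0.
rewrite take_size_cat // drop_cat ltnNge leqnSn /= subSn // subnn /= drop0.
rewrite size_cat /= in Hs.
by rewrite IHl ?IHr //; lia.
Qed.

Fixpoint swapP (P : nat -> bool) t := match t with BLeaf => BLeaf | BNode l m r =>
  let l' := swapP P l in let r' := swapP P r in
  if P m && onechild l r then BNode r' m l' else BNode l' m r' end.

Fixpoint G t (b : bool) := match t with BLeaf => BLeaf | BNode l m r =>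
  let l' := G l b in let r' := G r (~~ b) in
  if b && onechild l r then BNode r' m l' else BNode l' m r' end.

Lemma isleaf_swapP P t : isleaf (swapP P t) = isleaf t.
Proof. by case: t => //= l m r; case: ifP. Qed.

Lemma onechildC l r : onechild l r = onechild r l.
Proof. by rewrite /onechild eq_sym. Qed.

Lemma swapP_comp P Q t : swapP Q (swapP P t) = swapP (fun y => P y (+) Q y) t.
Proof.
elim: t => //= l IHl m r IHr.
have Ho1 : onechild (swapP P r) (swapP P l) = onechild l r by rewrite /onechild !isleaf_swapP eq_sym.
have Ho2 : onechild (swapP P l) (swapP P r) = onechild l r by rewrite /onechild !isleaf_swapP.
by case Pm: (P m); case Qm: (Q m); case Ho: (onechild l r); rewrite /= ?Pm ?Ho1 ?Ho2 ?Ho /= ?Qm ?Ho1 ?Ho2 ?Ho /= ?IHl ?IHr.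
Qed.

Lemma eq_swapP P Q t : {in blabels t, P =1 Q} -> swapP P t = swapP Q t.
Proof.
elim: t => //= l IHl m r IHr H.
rewrite H ?mem_cat ?mem_head ?orbT // IHl ?IHr // => y Hy; apply: H;
  by rewrite mem_cat ?in_cons Hy ?orbT.
Qed.

Lemma swapP0 t : swapP (fun _ => false) t = t.
Proof. by elim: t => //= l -> m r ->. Qed.

Lemma swapP_perm P t : perm_eq (blabels (swapP P t)) (blabels t).
Proof.
elim: t => //= l IHl m r IHr.
have H1 : perm_eq (m :: blabels (swapP P l)) (m :: blabels l) by rewrite perm_cons.
have H2 : perm_eq (m :: blabels (swapP P r)) (m :: blabels r) by rewrite perm_cons.
case: ifP => _ /=; last exact: perm_cat IHl H2.
apply: (@perm_trans _ (blabels r ++ m :: blabels l)); first exact: perm_cat IHr H1.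
by apply/permP=> p; rewrite !count_cat /=; lia.
Qed.

Lemma heap_swapP P t : heap t -> heap (swapP P t).
Proof.
elim: t => //= l IHl m r IHr /and4P [H1 H2 H3 H4].
have E1 := perm_all (fun y => y < m) (swapP_perm P l).
have E2 := perm_all (fun y => y < m) (swapP_perm P r).
by case: ifP => _ /=; rewrite E1 E2 H1 H2 IHl ?IHr.
Qed.

Lemma G_swapP t b : uniq (blabels t) -> G t b = swapP (fun y => b (+) odd (rights t y)) t.
Proof.
elim: t b => //= l IHl m r IHr b.
rewrite cat_uniq [has _ (_ :: _)]/= cons_uniq => /and3P [Hul /norP [Hml Hlr] /andP [Hmr Hur]].
rewrite eqxx addbF IHl // IHr //.
rewrite (@eq_swapP _ (fun y => b (+) odd (rights (BNode l m r) y)) l); last first.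
  move=> y Hy /=; have -> : (y == m) = false by apply/negP=> /eqP E; rewrite -E Hy in Hml.
  by rewrite Hy.
rewrite (@eq_swapP _ (fun y => b (+) odd (rights (BNode l m r) y)) r); last first.
  move=> y Hy /=; have -> : (y == m) = false by apply/negP=> /eqP E; rewrite -E Hy in Hmr.
  have -> : (y \in blabels l) = false.
    by apply/negP=> Hy'; move/hasP: Hlr; apply; exists y.
  by rewrite addbN addNb.
by [].
Qed.

Lemma G_inj t1 t2 b : G t1 b = G t2 b -> t1 = t2.
Proof.
elim: t1 t2 b => [|l1 IHl m1 r1 IHr] [|l2 m2 r2] b //=; try by case: ifP.
have iG : forall t b, isleaf (G t b) = isleaf t by move=> [|? ? ?] ? //=; case: ifP.
case: ifP => H1; case: ifP => H2 [] E1 E2 E3.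
- by rewrite (IHl _ _ E3) (IHr _ _ E1) E2.
- move: H1 H2; rewrite /onechild -(iG r1 (~~ b)) E1 -(iG l1 b) E3 !iG.
  by case/andP => -> ?; rewrite eq_sym => /negbT /negP.
- move: H1 H2; rewrite /onechild -(iG l1 b) E1 -(iG r1 (~~ b)) E3 !iG.
  by move=> H /andP [Hb Ho]; rewrite Hb eq_sym Ho in H.
- by rewrite (IHl _ _ E1) (IHr _ _ E3) E2.
Qed.

Lemma head_cat_cons N (v s : seq nat) m : head N (v ++ m :: s) = head m v.
Proof. by case: v. Qed.

Lemma last_cat_cons N (s u : seq nat) m : last N (s ++ m :: u) = last m u.
Proof. by rewrite last_cat. Qed.

Lemma factor t x : heap t -> uniq (blabels t) -> x \in blabels t ->
 exists u v l r, [/\ blabels t = u ++ blabels l ++ x :: blabels r ++ v,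
   blabels (swapP (fun y => y == x) t) =
     u ++ blabels (if onechild l r then r else l) ++ x :: blabels (if onechild l r then l else r) ++ v,
   all (fun y => y < x) (blabels l) && all (fun y => y < x) (blabels r),
   (forall N, x < N -> x < last N u) & (forall N, x < N -> x < head N v)].
Proof.
elim: t => //= l IHl m r IHr /and4P [Hl Hr hl hr].
rewrite cat_uniq [has _ (_ :: _)]/= cons_uniq => /and3P [Hul /norP [Hml Hlr] /andP [Hmr Hur]].
have Hnl : forall y, y \in blabels l -> y \in blabels r -> False.
  by move=> y H1 H2; move/hasP: Hlr; apply; exists y.
rewrite mem_cat in_cons => Hx.
case Hxm: (x == m).
  move/eqP: Hxm => Hxm; subst x.
  exists [::], [::], l, r; split => //; try by [].
  - by rewrite cats0.
  - rewrite eqxx /= (@eq_swapP _ (fun _ => false) l) ?(@eq_swapP _ (fun _ => false) r) ?swapP0.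
    + by case: ifP; rewrite cats0.
    + by move=> y Hy /=; apply/eqP=> E; rewrite -E Hy in Hmr.
    + by move=> y Hy /=; apply/eqP=> E; rewrite -E Hy in Hml.
  - by rewrite Hl Hr.
rewrite Hxm /= in Hx.
case/orP: Hx => Hx.
  have [u [v [l' [r' [E1 E2 H12 Hu Hv]]]]] := IHl hl Hul Hx.
  have xm : x < m by move/allP: Hl; apply.
  exists u, (v ++ m :: blabels r), l', r'; split => //.
  - by rewrite E1 -!catA /= -!catA.
  - rewrite eq_sym Hxm /= (@eq_swapP _ (fun _ => false) r) ?swapP0 /=.
      by rewrite E2 -!catA /= -!catA.
    by move=> y Hy /=; apply/eqP=> E; subst y; apply: (Hnl x).
  - by move=> N _; rewrite head_cat_cons; apply: Hv.
have [u [v [l' [r' [E1 E2 H12 Hu Hv]]]]] := IHr hr Hur Hx.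
have xm : x < m by move/allP: Hr; apply.
exists (blabels l ++ m :: u), v, l', r'; split => //.
- by rewrite E1 -!catA.
- rewrite eq_sym Hxm /= (@eq_swapP _ (fun _ => false) l) ?swapP0 /=.
    by rewrite E2 -!catA.
  by move=> y Hy /=; apply/eqP=> E; subst y; apply: (Hnl x).
- by move=> N _; rewrite last_cat_cons; apply: Hu.
Qed.

Lemma nth_prev (S : nat) s t : nth S (S :: s ++ t) (size s) = last S s.
Proof.
rewrite -cat_cons nth_cat /= ltnSn.
by rewrite -[X in nth _ _ X]/((size (S :: s)).-1) nth_last.
Qed.

Lemma nb_lemma u lam x rho v : x \notin u -> all (fun y => y < x) lam ->
  left_nb (u ++ lam ++ x :: rho ++ v) x = last (sent (u ++ lam ++ x :: rho ++ v)) (u ++ lam) /\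
  right_nb (u ++ lam ++ x :: rho ++ v) x = head (sent (u ++ lam ++ x :: rho ++ v)) (rho ++ v).
Proof.
move=> Hu Hl.
set S := sent _.
have Hxl : x \notin lam by apply/negP=> H; move/allP: Hl => /(_ x H); rewrite ltnn.
have Hi : index x (u ++ lam ++ x :: rho ++ v) = size (u ++ lam).
  by rewrite catA index_cat mem_cat (negbTE Hu) (negbTE Hxl) /= eqxx addn0.
rewrite /left_nb /right_nb Hi; split.
  by have := nth_prev S (u ++ lam) (x :: rho ++ v); rewrite -catA => ->.
rewrite catA.
by rewrite nth_cat ltnNge leqnSn /= subSnn /= nth0 /S catA.
Qed.

Lemma find_pairs rho v S x : rho != [::] -> all (fun y => y < x) rho -> x < head S v ->
  find (fun p : nat * nat => (p.1 < x) && (x < p.2)) (zip (rho ++ v) (rcons (behead (rho ++ v)) S))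
  = (size rho).-1.
Proof.
elim: rho => [|a rho IH] // _ /= /andP [Ha Hr] Hv.
case: rho IH Hr => [|b rho] IH Hr /=.
  by clear IH; case: v Hv => [|c v] /= Hv; rewrite Ha Hv.
move/andP: (Hr) => [Hb _].
have -> : (x < b) = false by apply/negbTE; rewrite -leqNgt ltnW.
by rewrite andbF IH.
Qed.

Lemma move_right_eq u x rho v : x \notin u -> rho != [::] -> all (fun y => y < x) rho ->
  x < head (sent (u ++ x :: rho ++ v)) v ->
  move_right (u ++ x :: rho ++ v) x = u ++ rho ++ x :: v.
Proof.
move=> Hu Hr Hl Hv.
rewrite /move_right.
have Hi : index x (u ++ x :: rho ++ v) = size u by rewrite index_cat (negbTE Hu) /= eqxx addn0.
rewrite Hi take_size_cat // drop_cat ltnNge leqnSn /= subSnn /= drop0.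
rewrite find_pairs // prednK ?lt0n ?size_eq0 //.
by rewrite take_size_cat // drop_size_cat.
Qed.

Lemma blabels_nil t : (blabels t == [::]) = isleaf t.
Proof. by case: t => //= l m r; case: (blabels l). Qed.

Lemma head_rev (N : nat) s : head N (rev s) = last N s.
Proof. by case/lastP: s => // s a; rewrite rev_rcons last_rcons. Qed.

Lemma phi'_tree t x : heap t -> uniq (blabels t) ->
  all (fun y => y <= size (blabels t)) (blabels t) ->
  phi' x (blabels t) = blabels (swapP (fun y => y == x) t).
Proof.
move=> Hh Hu Hs.
case Hx: (x \in blabels t); last first.
  rewrite /phi' /is_dd /is_da Hx /= (@eq_swapP _ (fun _ => false)) ?swapP0 //.
  by move=> y Hy /=; apply/eqP=> E; subst y; rewrite Hy in Hx.
have Hxs : x < sent (blabels t) by rewrite /sent ltnS; move/allP: Hs; apply.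
have [u [v [l [r [E1 E2 /andP [Hl Hr] Hu' Hv']]]]] := factor Hh Hu Hx.
move: (Hu' _ Hxs) (Hv' _ Hxs) => {Hu' Hv'}.
rewrite E2; rewrite E1 in Hx Hxs Hu *.
have Hxu : x \notin u.
  by move: Hu; rewrite cat_uniq => /and3P [_ /hasP H _]; apply/negP=> Hxu; apply: H; exists x;
     rewrite // mem_cat in_cons eqxx orbT.
have Hxv : x \notin v.
  move: Hu; rewrite catA cat_uniq => /and3P [_ _].
  by rewrite cons_uniq mem_cat negb_or => /andP [/andP [_ ->] _].
have [EL ER] := nb_lemma (blabels r) v Hxu Hl.
rewrite !(fun_if blabels) /onechild -!blabels_nil.
move: Hl Hr EL ER Hxs; rewrite /phi' /is_dd /is_da Hx /=.
set S := sent _.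
case El: (blabels l) => [|a ls]; case Er: (blabels r) => [|b rs] /= Hl Hr -> -> Hxs Hul Hvh.
- have H1 : (head S v < x) = false by rewrite ltnNge ltnW.
  have H2 : (last S u < x) = false by rewrite ltnNge ltnW.
  by rewrite cats0 H1 H2 !andbF.
- have Hb : b < x by case/andP: Hr.
  rewrite cats0 Hul Hb /=.
  apply: (@move_right_eq u x (b :: rs) v) => //.
  suff -> : sent (u ++ x :: (b :: rs) ++ v) = S by []. 
  by rewrite /S El Er.
- have Hlast : last S (u ++ a :: ls) < x.
    have HlA : all (fun y => y < x) (a :: ls) := Hl.
    by rewrite last_cat_cons; apply: (allP HlA); exact: mem_last.
  have -> : (x < last S (u ++ a :: ls)) = false by rewrite ltnNge ltnW.
  rewrite Hlast Hvh /=.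
  have -> : rev (u ++ a :: ls ++ x :: v) = rev v ++ x :: rev (a :: ls) ++ rev u.
    by rewrite -[a :: ls ++ x :: v]/((a :: ls) ++ x :: v) !rev_cat (rev_cons x v) -cats1 -!catA.
  rewrite move_right_eq ?mem_rev ?all_rev //.
  + by rewrite !rev_cat (rev_cons x (rev u)) !revK -cats1 -!catA.
  + by rewrite -size_eq0 size_rev.
  + suff -> : sent (rev v ++ x :: rev (a :: ls) ++ rev u) = S by rewrite head_rev.
    rewrite /S El Er /sent !size_cat !size_rev /= !size_cat /= !size_rev /=; lia.
- have Hlast : last S (u ++ a :: ls) < x.
    have HlA : all (fun y => y < x) (a :: ls) := Hl.
    by rewrite last_cat_cons; apply: (allP HlA); exact: mem_last.
  have -> : (x < last S (u ++ a :: ls)) = false by rewrite ltnNge ltnW.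
  have Hb : b < x by case/andP: Hr.
  have -> : (x < b) = false by rewrite ltnNge ltnW.
  by rewrite andbF.
Qed.

Lemma fold_phi' t S : heap t -> uniq (blabels t) -> all (fun y => y <= size (blabels t)) (blabels t) ->
  foldr phi' (blabels t) S = blabels (swapP (fun y => odd (count_mem y S)) t).
Proof.
move=> Hh Hu Hs; elim: S => [|x S IH] /=; first by rewrite swapP0.
rewrite IH.
have Hp := swapP_perm (fun y => odd (count_mem y S)) t.
rewrite phi'_tree ?heap_swapP ?(perm_uniq Hp) ?(perm_size Hp) ?(perm_all _ Hp) //.
rewrite swapP_comp; congr blabels; apply: eq_swapP => y _.
by rewrite oddD eq_sym; case: (x == y) => /=; rewrite ?addbT ?addbF.
Qed.

Fixpoint D t := match t with BLeaf => 0 | BNode l m r => ~~ isleaf r + D l + D r end.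
Fixpoint O t (b : bool) := match t with BLeaf => 0 | BNode l m r => b + O l b + O r (~~ b) end.

Lemma des_consE a s : des (a :: s) = (if s is b :: _ then b < a else false) + des s.
Proof. by case: s. Qed.

Lemma des_rcons s x : all (fun y => y < x) s -> des (rcons s x) = des s.
Proof.
elim: s => [|a s IH] //= /andP [Ha Hs].
rewrite des_consE [des (a :: s)]des_consE IH //.
by case: s IH Hs => [|b s] //= _ _; rewrite ltnNge (ltnW Ha).
Qed.

Lemma des_cons x s : all (fun y => y < x) s -> des (x :: s) = (s != [::]) + des s.
Proof. by rewrite des_consE; case: s => [|b s] //= /andP [-> _]. Qed.

Lemma des_cat s x t : des (s ++ x :: t) = des (rcons s x) + des (x :: t).
Proof.
elim: s => [|a s IH] //=.
rewrite des_consE [des (a :: rcons s x)]des_consE IH addnA.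
by case: s {IH}.
Qed.

Lemma des_tree t : heap t -> des (blabels t) = D t.
Proof.
elim: t => //= l IHl m r IHr /and4P [Hl Hr hl hr].
rewrite des_cat des_rcons // des_cons // IHl // IHr // blabels_nil.
by case: (isleaf r) => /=; lia.
Qed.

Lemma isleaf_G t b : isleaf (G t b) = isleaf t.
Proof. by case: t => //= l m r; case: ifP. Qed.

Lemma O_G t b : O t b = D (G t b) + (b && ~~ isleaf t).
Proof.
elim: t b => [b|l IHl m r IHr b] /=; first by rewrite andbF.
rewrite IHl IHr.
case: b; case El: (isleaf l); case Er: (isleaf r); rewrite /onechild El Er /= ?isleaf_G ?El ?Er /=; lia.
Qed.

Lemma lrb_nil k : lrblocks_f k [::] = [::].
Proof. by case: k. Qed.

Lemma lrb_fuel k1 k2 s : size s <= k1 -> size s <= k2 -> lrblocks_f k1 s = lrblocks_f k2 s.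
Proof.
elim: k1 k2 s => [|k1 IH] k2 [|a s] //=; rewrite ?lrb_nil //.
case: k2 => [|k2] //= H1 H2; congr (_ :: _); apply: IH; rewrite size_drop; lia.
Qed.

Lemma lrb_cat k s m r : size (s ++ m :: r) <= k -> all (fun y => y < m) s -> all (fun y => y < m) r ->
  lrblocks_f k (s ++ m :: r) = lrblocks_f k s ++ [:: (m, r)].
Proof.
move=> + + Hr; elim: k s => [|k IH] s; first by rewrite size_cat /= addnS.
case: s => [|a s] /= Hs.
  have Hf : find (fun b => m < b) r = size r.
    apply: hasNfind; apply/hasPn => y Hy; rewrite -leqNgt ltnW //; exact: (allP Hr).
  by rewrite Hf take_size drop_size lrb_nil.
case/andP => Ha Hsa.
set j := find (fun b => a < b) s.
have Hj : find (fun b => a < b) (s ++ m :: r) = j.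
  rewrite find_cat /j; case: ifP => // /negbT Hn; rewrite (hasNfind Hn) /= Ha addn0 //.
have Hjs : j <= size s by exact: find_size.
rewrite Hj takel_cat //.
have -> : drop j (s ++ m :: r) = drop j s ++ m :: r.
  rewrite drop_cat; case: ltnP => // Hjs'.
  have Ej : j = size s by apply/eqP; rewrite eqn_leq Hjs Hjs'.
  by rewrite Ej subnn drop0 drop_size.
rewrite IH //.
- by rewrite size_cat size_drop /=; rewrite size_cat /= in Hs; lia.
- by apply/allP => y /mem_drop Hy; exact: (allP Hsa).
Qed.

Definition Ff k w h := sumn [seq even_count (utree_f k p.2 p.1) h | p <- lrblocks w].

Lemma Ff_tree t k h : heap t -> size (blabels t) <= k -> Ff k (blabels t) h = O t (~~ odd h).
Proof.
elim: t k h => [|l IHl m r IHr] k h /=; first by rewrite /Ff /lrblocks.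
case/and4P => Hl Hr hl hr Hs.
have Hsl : size (blabels l) <= size (blabels l ++ m :: blabels r) by rewrite size_cat leq_addr.
rewrite /Ff /lrblocks lrb_cat // (@lrb_fuel _ (size (blabels l))) ?leqnn //.
rewrite map_cat sumn_cat.
case: k Hs => [|k] Hs; first by rewrite size_cat /= addnS in Hs.
rewrite size_cat /= in Hs.
have -> : sumn [seq even_count (utree_f k.+1 p.2 p.1) h | p <- [:: (m, blabels r)]]
   = ~~ odd h + Ff k (blabels r) h.+1.
  by rewrite /= addn0 /Ff -map_comp.
rewrite -/(Ff k.+1 (blabels l) h) IHl ?IHr //; try lia.
by rewrite oddS negbK; lia.
Qed.

Lemma veh_Ff w : veh w = Ff (size w) w 1.
Proof. by rewrite /veh /utree /= /Ff -map_comp. Qed.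

Lemma perm_facts n w : is_perm_word n w -> [/\ uniq w, size w = n & forall y, y \in w -> 1 <= y <= n].
Proof.
rewrite /is_perm_word => Hp; split.
- by rewrite (perm_uniq Hp) iota_uniq.
- by rewrite (perm_size Hp) size_iota.
- by move=> y; rewrite (perm_mem Hp) mem_iota; lia.
Qed.

Lemma heap_G t b : heap t -> uniq (blabels t) -> heap (G t b) /\ uniq (blabels (G t b)).
Proof.
move=> Hh Hu; rewrite G_swapP //; split; first exact: heap_swapP.
by rewrite (perm_uniq (swapP_perm _ _)).
Qed.

Lemma Psi_eq n w : is_perm_word n w -> Psi' w = blabels (G (dbt w) false).
Proof.
case/perm_facts => Hu Hs Hm.
have [Hh Hb] := dbt_fP (leqnn (size w)) Hu.
have Hb' : blabels (dbt w) = w by exact: Hb.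
have Hh' : heap (dbt w) by exact: Hh.
have -> : Psi' w = foldr phi' (blabels (dbt w)) (Odd w) by rewrite Hb'.
have Hu' : uniq (blabels (dbt w)) by rewrite Hb'.
rewrite fold_phi' //; last first.
  by rewrite Hb'; apply/allP => y /Hm; rewrite Hs => /andP [].
rewrite G_swapP //; congr blabels; apply: eq_swapP => y; rewrite Hb' => Hy.
rewrite count_uniq_mem ?filter_uniq ?iota_uniq // mem_filter mem_iota.
have := Hm y Hy; rewrite Hs /r_pi => /andP [H1 H2].
by rewrite H1 /= add1n ltnS H2 andbT; case: (odd (rights (dbt w) y)).
Qed.

From Stdlib Require Import ClassicalEpsilon.

Theorem theorem7p2 (n : nat) (T : seq nat -> Prop)
  (HT : forall w, T w -> is_perm_word n w)
  (Hinv : forall (x : nat) (w : seq nat), 1 <= x <= n -> T w -> T (phi' x w)) :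
  [/\ (forall w, T w -> T (Psi' w)),
      (forall w1 w2, T w1 -> T w2 -> Psi' w1 = Psi' w2 -> w1 = w2),
      (forall s, T s -> exists w, T w /\ Psi' w = s) &
      (forall w, T w -> veh w = des (Psi' w))].
Proof.
have PA : forall w, T w -> T (Psi' w).
  move=> w Tw; have [Hu Hs Hm] := perm_facts (HT w Tw).
  have : all (fun x => 1 <= x <= n) (Odd w).
    by apply/allP => x; rewrite mem_filter mem_iota Hs => /andP [_]; lia.
  rewrite /Psi'; elim: (Odd w) => //= x S IH /andP [Hx HS].
  exact: Hinv Hx (IH HS).
have PB : forall w1 w2, T w1 -> T w2 -> Psi' w1 = Psi' w2 -> w1 = w2.
  move=> w1 w2 T1 T2.
  rewrite (Psi_eq (HT _ T1)) (Psi_eq (HT _ T2)) => E.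
  have [Hu1 _ _] := perm_facts (HT _ T1).
  have [Hu2 _ _] := perm_facts (HT _ T2).
  have [Hh1 Hb1] := dbt_fP (leqnn (size w1)) Hu1.
  have [Hh2 Hb2] := dbt_fP (leqnn (size w2)) Hu2.
  have Hb1' : blabels (dbt w1) = w1 by exact: Hb1.
  have Hb2' : blabels (dbt w2) = w2 by exact: Hb2.
  have [g1 u1] := heap_G false Hh1 (etrans (congr1 uniq Hb1) Hu1).
  have [g2 u2] := heap_G false Hh2 (etrans (congr1 uniq Hb2) Hu2).
  have E1 := dbtB g1 u1 (leqnn _).
  have E2 := dbtB g2 u2 (leqnn _).
  rewrite E E2 in E1.
  have Et := G_inj E1.
  by rewrite -Hb1 -Hb2 Et.
split => //.
- move=> s Ts.
  pose tb := fun w => if excluded_middle_informative (T w) then true else false.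
  have tbP : forall w, tb w = true <-> T w.
    by move=> w; rewrite /tb; case: excluded_middle_informative.
  pose L := [seq w <- permutations (iota 1 n) | tb w].
  have memL : forall w, (w \in L) = tb w.
    move=> w; rewrite mem_filter mem_permutations.
    case E: (tb w) => //=; exact: HT (proj1 (tbP w) E).
  have uL : uniq L by rewrite filter_uniq ?permutations_uniq.
  have sub : {subset [seq Psi' w | w <- L] <= L}.
    move=> y /mapP [w Hw ->]; rewrite memL; apply/tbP; apply: PA; apply/tbP; rewrite -memL //.
  have uM : uniq [seq Psi' w | w <- L].
    rewrite map_inj_in_uniq // => w1 w2 H1 H2; apply: PB; apply/tbP; rewrite -memL //.
  have Hsz : size L <= size [seq Psi' w | w <- L] by rewrite size_map.
  have [_ Heq] := uniq_min_size uM sub Hsz.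
  have : s \in L by rewrite memL; apply/tbP.
  rewrite -Heq => /mapP [w Hw ->]; exists w; split=> //; apply/tbP; rewrite -memL //.
- move=> w Tw.
  have [Hu Hs Hm] := perm_facts (HT w Tw).
  have [Hh Hb] := dbt_fP (leqnn (size w)) Hu.
  have Hu' : uniq (blabels (dbt_f (size w) w)) by rewrite Hb.
  have [gh _] := heap_G false Hh Hu'.
  rewrite (Psi_eq (HT _ Tw)) des_tree // veh_Ff.
  have := Ff_tree 1 Hh (leqnn _); rewrite Hb => ->.
  by rewrite O_G addn0.
Qed.
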